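(* For every odd $r\ge1$, the tuple $(p_{r,n}1_n)_{n\ge0}$, where $p_{r,n}=\sum_{i=1}^nx_i^r$ is the $r$th power sum, lies in the center $Z(\mathcal{NB}_t)$.
   Context: Let $\Bbbk$ be a field of characteristic $\neq2$, $t\in\{0,1\}$, and let $\mathcal{NB}_t$ be the nil-Brauer category: the strict graded $\Bbbk$-linear monoidal category (tensor $\star$, unit $\mathbb1$, composition $\circ$) generated by an object $B$ and morphisms $x:B\to B$ (degree 2), $\tau:B\star B\to B\star B$ (degree $-2$), $\cap:B\star B\to\mathbb1$, $\cup:\mathbb1\to B\star B$ (degree 0), with relations ($1=1_B$): $\tau\circ\tau=0$; $(\tau\star1)\circ(1\star\tau)\circ(\tau\star1)=(1\star\tau)\circ(\tau\star1)\circ(1\star\tau)$; $\cap\circ\cup=t1_{\mathbb1}$; $(\cap\star1)\circ(1\star\cup)=1=(1\star\cap)\circ(\cup\star1)$; $\cap\circ\tau=0$; $(1\star\cap)\circ(\tau\star1)=(\cap\star1)\circ(1\star\tau)$; $(x\star1)\circ\tau-\tau\circ(1\star x)=1\star1-\cup\circ\cap$; $\cap\circ(1\star x)=-\cap\circ(x\star1)$. For $g\in\Bbbk[x_1,\dots,x_n]$, $g1_n$ is the endomorphism of $B^{\star n}$ obtained by substituting $x_i\mapsto1^{\star(i-1)}\star x\star1^{\star(n-i)}$. The center $Z(\mathcal{NB}_t)$ consists of tuples $(z_n)_{n\ge0}$, $z_n\in\mathrm{End}(B^{\star n})$, with $z_m\circ f=f\circ z_n$ for all $f:B^{\star n}\to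 B^{\star m}$. *)

(* Defs.v *)
(* Presentation of the nil-Brauer category NB_t by
   generators and relations, as a strict K-linear monoidal category.
   Objects B^{*n} are identified with n : nat (B^{*n} * B^{*m} = B^{*(n+m)},
   unit = 0).  Morphisms are formal (untyped) terms, with a typing judgement
   [typed f n m] (f : B^{*n} -> B^{*m}); the morphism space Hom(n,m) is the
   set of typed terms modulo [eqv K t n m], the smallest congruence (w.r.t.
   composition, tensor product and K-linear structure) containing the axioms
   of a strict K-linear monoidal category and the defining relations of NB_t. *)
From mathcomp Require Import all_boot all_algebra.
Set Implicit Arguments. Unset Strict Implicit. Unset Printing Implicit Defensive.
Import GRing.Theory.
Local Open Scope ring_scope.

Section NB.
Variable K : fieldType.

Inductive term : Type :=
| Tid   : nat -> term
| Tx    : term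
| Ttau  : term
| Tcap  : term
| Tcup  : term
| Tcomp : term -> term -> term       (* Tcomp g f = g o f *)
| Ttens : term -> term -> term
| Tzero : term
| Tadd  : term -> term -> term
| Tscale : K -> term -> term.

Inductive typed : term -> nat -> nat -> Prop :=
| ty_id n : typed (Tid n) n n
| ty_x : typed Tx 1 1
| ty_tau : typed Ttau 2 2
| ty_cap : typed Tcap 2 0
| ty_cup : typed Tcup 0 2
| ty_comp g f n m p : typed g m p -> typed f n m -> typed (Tcomp g f) n p
| ty_tens f g n1 m1 n2 m2 :
    typed f n1 m1 -> typed g n2 m2 -> typed (Ttens f g) (n1 + n2) (m1 + m2)
| ty_zero n m : typed Tzero n m
| ty_add f g n m : typed f n m -> typed g n m -> typed (Tadd f g) n m
| ty_scale a f n m : typed f n m -> typed (Tscale a f) n m.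

Notation "1B" := (Tid 1).
Notation Tneg f := (Tscale (-1) f).

Inductive eqv (t : bool) : nat -> nat -> term -> term -> Prop :=
| eqv_refl n m f : typed f n m -> eqv t n m f f
| eqv_sym n m f g : eqv t n m f g -> eqv t n m g f
| eqv_trans n m f g h : eqv t n m f g -> eqv t n m g h -> eqv t n m f h
| eqv_comp n m p g g' f f' :
    eqv t m p g g' -> eqv t n m f f' -> eqv t n p (Tcomp g f) (Tcomp g' f')
| eqv_tens n1 m1 n2 m2 f f' g g' :
    eqv t n1 m1 f f' -> eqv t n2 m2 g g' ->
    eqv t (n1 + n2) (m1 + m2) (Ttens f g) (Ttens f' g')
| eqv_add n m f f' g g' :
    eqv t n m f f' -> eqv t n m g g' -> eqv t n m (Tadd f g) (Tadd f' g')
| eqv_scale n m a f f' : eqv t n m f f' -> eqv t n m (Tscale a f) (Tscale a f')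
| eqv_idl n m f : typed f n m -> eqv t n m (Tcomp (Tid m) f) f
| eqv_idr n m f : typed f n m -> eqv t n m (Tcomp f (Tid n)) f
| eqv_compA n m p q h g f : typed h p q -> typed g m p -> typed f n m ->
    eqv t n q (Tcomp h (Tcomp g f)) (Tcomp (Tcomp h g) f)
| eqv_tensA n1 m1 n2 m2 n3 m3 f g h :
    typed f n1 m1 -> typed g n2 m2 -> typed h n3 m3 ->
    eqv t (n1 + n2 + n3) (m1 + m2 + m3) (Ttens (Ttens f g) h) (Ttens f (Ttens g h))
| eqv_tens1l n m f : typed f n m -> eqv t n m (Ttens (Tid 0) f) f
| eqv_tens1r n m f : typed f n m -> eqv t n m (Ttens f (Tid 0)) f
| eqv_tens_id n m : eqv t (n + m) (n + m) (Ttens (Tid n) (Tid m)) (Tid (n + m))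
| eqv_interchange n1 m1 p1 n2 m2 p2 f1 g1 f2 g2 :
    typed f1 n1 m1 -> typed g1 m1 p1 -> typed f2 n2 m2 -> typed g2 m2 p2 ->
    eqv t (n1 + n2) (p1 + p2) (Tcomp (Ttens g1 g2) (Ttens f1 f2))
                               (Ttens (Tcomp g1 f1) (Tcomp g2 f2))
| eqv_addA n m f g h : typed f n m -> typed g n m -> typed h n m ->
    eqv t n m (Tadd f (Tadd g h)) (Tadd (Tadd f g) h)
| eqv_addC n m f g : typed f n m -> typed g n m -> eqv t n m (Tadd f g) (Tadd g f)
| eqv_add0 n m f : typed f n m -> eqv t n m (Tadd Tzero f) f
| eqv_scale0 n m f : typed f n m -> eqv t n m (Tscale 0 f) Tzero
| eqv_scale1 n m f : typed f n m -> eqv t n m (Tscale 1 f) f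
| eqv_scaleA n m a b f : typed f n m ->
    eqv t n m (Tscale a (Tscale b f)) (Tscale (a * b) f)
| eqv_scaleDl n m a b f : typed f n m ->
    eqv t n m (Tscale (a + b) f) (Tadd (Tscale a f) (Tscale b f))
| eqv_scaleDr n m a f g : typed f n m -> typed g n m ->
    eqv t n m (Tscale a (Tadd f g)) (Tadd (Tscale a f) (Tscale a g))
| eqv_compDl n m p g1 g2 f : typed g1 m p -> typed g2 m p -> typed f n m ->
    eqv t n p (Tcomp (Tadd g1 g2) f) (Tadd (Tcomp g1 f) (Tcomp g2 f))
| eqv_compDr n m p g f1 f2 : typed g m p -> typed f1 n m -> typed f2 n m ->
    eqv t n p (Tcomp g (Tadd f1 f2)) (Tadd (Tcomp g f1) (Tcomp g f2))
| eqv_compZl n m p a g f : typed g m p -> typed f n m ->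
    eqv t n p (Tcomp (Tscale a g) f) (Tscale a (Tcomp g f))
| eqv_compZr n m p a g f : typed g m p -> typed f n m ->
    eqv t n p (Tcomp g (Tscale a f)) (Tscale a (Tcomp g f))
| eqv_tensDl n1 m1 n2 m2 f1 f2 g : typed f1 n1 m1 -> typed f2 n1 m1 -> typed g n2 m2 ->
    eqv t (n1 + n2) (m1 + m2) (Ttens (Tadd f1 f2) g) (Tadd (Ttens f1 g) (Ttens f2 g))
| eqv_tensDr n1 m1 n2 m2 f g1 g2 : typed f n1 m1 -> typed g1 n2 m2 -> typed g2 n2 m2 ->
    eqv t (n1 + n2) (m1 + m2) (Ttens f (Tadd g1 g2)) (Tadd (Ttens f g1) (Ttens f g2))
| eqv_tensZl n1 m1 n2 m2 a f g : typed f n1 m1 -> typed g n2 m2 ->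
    eqv t (n1 + n2) (m1 + m2) (Ttens (Tscale a f) g) (Tscale a (Ttens f g))
| eqv_tensZr n1 m1 n2 m2 a f g : typed f n1 m1 -> typed g n2 m2 ->
    eqv t (n1 + n2) (m1 + m2) (Ttens f (Tscale a g)) (Tscale a (Ttens f g))
| nb_tau2 : eqv t 2 2 (Tcomp Ttau Ttau) Tzero
| nb_braid : eqv t 3 3
    (Tcomp (Ttens Ttau 1B) (Tcomp (Ttens 1B Ttau) (Ttens Ttau 1B)))
    (Tcomp (Ttens 1B Ttau) (Tcomp (Ttens Ttau 1B) (Ttens 1B Ttau)))
| nb_bubble : eqv t 0 0 (Tcomp Tcap Tcup) (Tscale (t%:R) (Tid 0))
| nb_zigzag1 : eqv t 1 1 (Tcomp (Ttens Tcap 1B) (Ttens 1B Tcup)) 1B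
| nb_zigzag2 : eqv t 1 1 (Tcomp (Ttens 1B Tcap) (Ttens Tcup 1B)) 1B
| nb_captau : eqv t 2 0 (Tcomp Tcap Ttau) Tzero
| nb_capslide : eqv t 3 1 (Tcomp (Ttens 1B Tcap) (Ttens Ttau 1B))
                           (Tcomp (Ttens Tcap 1B) (Ttens 1B Ttau))
| nb_dot : eqv t 2 2
    (Tadd (Tcomp (Ttens Tx 1B) Ttau) (Tneg (Tcomp Ttau (Ttens 1B Tx))))
    (Tadd (Ttens 1B 1B) (Tneg (Tcomp Tcup Tcap)))
| nb_capdot : eqv t 2 0 (Tcomp Tcap (Ttens 1B Tx)) (Tneg (Tcomp Tcap (Ttens Tx 1B))).

(* x_i 1_n  (0-based index i < n): 1^{*i} * x * 1^{*(n-i-1)} *)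
Definition xi (n i : nat) : term := Ttens (Ttens (Tid i) Tx) (Tid (n - i.+1)).

Fixpoint endpow (n : nat) (f : term) (r : nat) : term :=
  if r is r'.+1 then Tcomp f (endpow n f r') else Tid n.

Fixpoint sum_terms (s : seq term) : term :=
  if s is f :: s' then Tadd f (sum_terms s') else Tzero.

Definition power_sum (r n : nat) : term :=
  sum_terms [seq endpow n (xi n i) r | i <- iota 0 n].

End NB.

(* Main.v *)
Require Import Defs.
From mathcomp Require Import all_boot all_algebra zify.
Set Implicit Arguments. Unset Strict Implicit. Unset Printing Implicit Defensive.
Import GRing.Theory.
Local Open Scope ring_scope.

Section P.
Variable K : fieldType.
Variable t : bool.
Local Notation term := (term K).
Local Notation E := (@eqv K t).
Local Notation I := (@Tid K 1).
Local Notation Z := (Tzero K).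
Local Notation Id := (Tid K).
Local Notation X := (Tx K).
Local Notation tau := (Ttau K).
Local Notation cap := (Tcap K).
Local Notation cup := (Tcup K).
Local Notation neg f := (Tscale (-1) f).

Lemma ty_tens_eq (f g : term) n1 m1 n2 m2 n m :
  typed f n1 m1 -> typed g n2 m2 -> n = (n1 + n2)%N -> m = (m1 + m2)%N ->
  typed (Ttens f g) n m.
Proof. by move=> *; subst; constructor. Qed.

Ltac arith := first [reflexivity | lia].

Ltac typ :=
  match goal with
  | |- @typed _ (@Ttens _ _ _) _ _ => eapply ty_tens_eq; [typ | typ | arith | arith]
  | |- @typed _ (@Tcomp _ _ _) _ _ => eapply ty_comp; [typ | typ]
  | |- @typed _ (@Tadd _ _ _) _ _ => apply ty_add; [typ | typ]
  | |- @typed _ (@Tscale _ _ _) _ _ => apply ty_scale; typ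
  | |- @typed _ (@Tid _ _) _ _ => apply ty_id
  | |- @typed _ (@Tx _) _ _ => apply ty_x
  | |- @typed _ (@Ttau _) _ _ => apply ty_tau
  | |- @typed _ (@Tcap _) _ _ => apply ty_cap
  | |- @typed _ (@Tcup _) _ _ => apply ty_cup
  | |- @typed _ (@Tzero _) _ _ => apply ty_zero
  | |- _ => first [eassumption | solve [eauto 3]]
  end.

Lemma eqv_typed n m (f g : term) : E n m f g -> typed f n m /\ typed g n m.
Proof.
elim=> {n m f g}; intros; repeat match goal with H : _ /\ _ |- _ => case: H => ? ? end;
  try (split; typ).
Qed.

Ltac typ2 := first [typ |
  match goal with
  | H : eqv _ _ _ ?f _ |- typed ?f _ _ => exact (proj1 (eqv_typed H))
  | H : eqv _ _ _ _ ?f |- typed ?f _ _ => exact (proj2 (eqv_typed H))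
  end].

Lemma eR n m (f : term) : typed f n m -> E n m f f.
Proof. exact: eqv_refl. Qed.
Lemma eS n m (f g : term) : E n m f g -> E n m g f.
Proof. exact: eqv_sym. Qed.

Ltac tr X := apply: (@eqv_trans K t _ _ _ X).

Lemma etensDl N M n1 m1 n2 m2 (f1 f2 g : term) : typed f1 n1 m1 -> typed f2 n1 m1 -> typed g n2 m2 ->
  N = (n1 + n2)%N -> M = (m1 + m2)%N -> E N M (Ttens (Tadd f1 f2) g) (Tadd (Ttens f1 g) (Ttens f2 g)).
Proof. by move=> ? ? ? -> ->; apply: eqv_tensDl. Qed.
Lemma etensDr N M n1 m1 n2 m2 (f g1 g2 : term) : typed f n1 m1 -> typed g1 n2 m2 -> typed g2 n2 m2 ->
  N = (n1 + n2)%N -> M = (m1 + m2)%N -> E N M (Ttens f (Tadd g1 g2)) (Tadd (Ttens f g1) (Ttens f g2)).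
Proof. by move=> ? ? ? -> ->; apply: eqv_tensDr. Qed.

Lemma etensZl N M n1 m1 n2 m2 a (f g : term) : typed f n1 m1 -> typed g n2 m2 ->
  N = (n1 + n2)%N -> M = (m1 + m2)%N -> E N M (Ttens (Tscale a f) g) (Tscale a (Ttens f g)).
Proof. by move=> ? ? -> ->; apply: eqv_tensZl. Qed.
Lemma etensZr N M n1 m1 n2 m2 a (f g : term) : typed f n1 m1 -> typed g n2 m2 ->
  N = (n1 + n2)%N -> M = (m1 + m2)%N -> E N M (Ttens f (Tscale a g)) (Tscale a (Ttens f g)).
Proof. by move=> ? ? -> ->; apply: eqv_tensZr. Qed.

Lemma comp0l n m p (f : term) : typed f n m -> E n p (Tcomp Z f) Z.
Proof.
move=> Hf.
tr (Tcomp (Tscale 0 Z) f).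
  apply: (@eqv_comp _ _ n m p); last exact: eR.
  by apply: eS; apply: eqv_scale0; typ.
tr (Tscale 0 (Tcomp Z f)); first by apply: eqv_compZl; typ.
by apply: eqv_scale0; typ.
Qed.

Lemma comp0r n m p (g : term) : typed g m p -> E n p (Tcomp g Z) Z.
Proof.
move=> Hg.
tr (Tcomp g (Tscale 0 Z)).
  apply: (@eqv_comp _ _ n m p); first exact: eR.
  by apply: eS; apply: eqv_scale0; typ.
tr (Tscale 0 (Tcomp g Z)); first by apply: eqv_compZr; typ.
by apply: eqv_scale0; typ.
Qed.

Lemma tens0l n1 m1 n2 m2 (g : term) : typed g n2 m2 ->
  E (n1 + n2) (m1 + m2) (Ttens Z g) Z.
Proof.
move=> Hg.
tr (Ttens (Tscale 0 Z) g).
  apply: eqv_tens; last exact: eR.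
  by apply: eS; apply: (@eqv_scale0 _ _ n1 m1); typ.
tr (Tscale 0 (Ttens Z g)); first by apply: etensZl; (try typ); arith.
by apply: eqv_scale0; typ.
Qed.

Lemma tens0r n1 m1 n2 m2 (f : term) : typed f n1 m1 ->
  E (n1 + n2) (m1 + m2) (Ttens f Z) Z.
Proof.
move=> Hf.
tr (Ttens f (Tscale 0 Z)).
  apply: eqv_tens; first exact: eR.
  by apply: eS; apply: (@eqv_scale0 _ _ n2 m2); typ.
tr (Tscale 0 (Ttens f Z)); first by apply: eqv_tensZr; typ.
by apply: eqv_scale0; typ.
Qed.

Lemma addr0 n m (f : term) : typed f n m -> E n m (Tadd f Z) f.
Proof. move=> Hf; tr (Tadd Z f); [apply: eqv_addC | apply: eqv_add0]; typ. Qed.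

Lemma addNr n m (f : term) : typed f n m -> E n m (Tadd f (Tscale (-1) f)) Z.
Proof.
move=> Hf.
tr (Tadd (Tscale 1 f) (Tscale (-1) f)).
  by apply: eqv_add; [apply: eS; apply: eqv_scale1 | apply: eR]; typ.
tr (Tscale (1 + -1) f); first by apply: eS; apply: eqv_scaleDl.
by rewrite subrr; apply: eqv_scale0.
Qed.

Lemma negK n m (f : term) : typed f n m -> E n m (Tscale (-1) (Tscale (-1) f)) f.
Proof.
move=> Hf; tr (Tscale ((-1) * (-1)) f); first exact: eqv_scaleA.
by rewrite mulN1r opprK; apply: eqv_scale1.
Qed.

Lemma add_move n m (a b c : term) : typed a n m -> typed b n m ->
  E n m (Tadd a (Tscale (-1) b)) c -> E n m a (Tadd b c).
Proof.
move=> Ha Hb H.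
have Hc : typed c n m by typ2.
tr (Tadd a Z); first by apply: eS; apply: addr0.
tr (Tadd a (Tadd (Tscale (-1) b) b)).
  apply: eqv_add; first exact: eR.
  apply: eS; tr (Tadd (Tscale (-1) b) (Tscale (-1) (Tscale (-1) b))).
    by apply: eqv_add; [apply: eR|apply: eS; apply: negK]; typ.
  by apply: addNr; typ.
tr (Tadd (Tadd a (Tscale (-1) b)) b); first by apply: eqv_addA; typ.
tr (Tadd c b); first by apply: eqv_add => //; apply: eR.
by apply: eqv_addC.
Qed.

Lemma add4 n m (a b c d : term) : typed a n m -> typed b n m -> typed c n m -> typed d n m ->
  E n m (Tadd (Tadd a b) (Tadd c d)) (Tadd (Tadd a c) (Tadd b d)).
Proof.
move=> Ha Hb Hc Hd.
tr (Tadd a (Tadd b (Tadd c d))); first by apply: eS; apply: eqv_addA; typ.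
tr (Tadd a (Tadd (Tadd b c) d)).
  by apply: eqv_add; [apply: eR | apply: eqv_addA]; typ.
tr (Tadd a (Tadd (Tadd c b) d)).
  apply: eqv_add; first exact: eR.
  by apply: eqv_add; [apply: eqv_addC | apply: eR]; typ.
tr (Tadd a (Tadd c (Tadd b d))).
  by apply: eqv_add; [apply: eR | apply: eS; apply: eqv_addA]; typ.
by apply: eqv_addA; typ.
Qed.


Lemma negZ n m : E n m (neg Z) Z.
Proof.
tr (neg (Tscale 0 Z)); first by apply: eqv_scale; apply: eS; apply: eqv_scale0; typ.
tr (Tscale (-1 * 0) Z); first by apply: eqv_scaleA; typ.
by rewrite mulr0; apply: eqv_scale0; typ.
Qed.

Lemma in_cons_hyp (P : nat -> Prop) a s : (forall x, x \in a :: s -> P x) ->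
  P a /\ (forall x, x \in s -> P x).
Proof. by move=> H; split => [|x Hx]; apply: H; rewrite inE ?eqxx ?Hx ?orbT. Qed.

Ltac hyps := repeat match goal with
  | H : forall x, is_true (x \in _) -> _ |- _ => destruct (in_cons_hyp H) as [? ?]; clear H
  end.

Section Sums.
Variables (n m : nat).

Lemma ty_sum (F : nat -> term) s : (forall a, a \in s -> typed (F a) n m) ->
  typed (sum_terms (map F s)) n m.
Proof.
elim: s => [|a s IH] H /=; first exact: ty_zero.
by hyps; apply: ty_add; auto.
Qed.

Lemma sum_congr (F G : nat -> term) s : (forall a, a \in s -> E n m (F a) (G a)) ->
  E n m (sum_terms (map F s)) (sum_terms (map G s)).
Proof.
elim: s => [|a s IH] H /=; first by apply: eR; typ.
by hyps; apply: eqv_add; auto.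
Qed.

Lemma sum_cat (F : nat -> term) s1 s2 : (forall a, a \in s1 ++ s2 -> typed (F a) n m) ->
  E n m (sum_terms (map F (s1 ++ s2))) (Tadd (sum_terms (map F s1)) (sum_terms (map F s2))).
Proof.
move=> HF.
have H2 : typed (sum_terms (map F s2)) n m.
  by apply: ty_sum => a Ha; apply: HF; rewrite mem_cat Ha orbT.
elim: s1 HF => [|a s1 IH] HF /=; first by apply: eS; apply: eqv_add0.
case/in_cons_hyp: HF => Ha HF.
have H1 : typed (sum_terms (map F s1)) n m by apply: ty_sum => x Hx; apply: HF; rewrite mem_cat Hx.
tr (Tadd (F a) (Tadd (sum_terms [seq F i | i <- s1]) (sum_terms [seq F i | i <- s2]))).
  by apply: eqv_add; [apply: eR | apply: IH].
exact: eqv_addA.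
Qed.

Lemma sum_add (F G : nat -> term) s : (forall a, a \in s -> typed (F a) n m) ->
  (forall a, a \in s -> typed (G a) n m) ->
  E n m (sum_terms (map (fun a => Tadd (F a) (G a)) s))
        (Tadd (sum_terms (map F s)) (sum_terms (map G s))).
Proof.
elim: s => [|a s IH] HF HG /=; first by apply: eS; apply: eqv_add0; typ.
hyps.
have HS1 : typed (sum_terms (map F s)) n m by apply: ty_sum.
have HS2 : typed (sum_terms (map G s)) n m by apply: ty_sum.
tr (Tadd (Tadd (F a) (G a)) (Tadd (sum_terms [seq F i | i <- s]) (sum_terms [seq G i | i <- s]))).
  by apply: eqv_add; auto; apply: eR; typ.
exact: add4.
Qed.

Lemma sum_neg (F : nat -> term) s : (forall a, a \in s -> typed (F a) n m) ->
  E n m (sum_terms (map (fun a => neg (F a)) s)) (neg (sum_terms (map F s))).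
Proof.
elim: s => [|a s IH] HF /=; first by apply: eS; apply: negZ.
hyps.
have HS1 : typed (sum_terms (map F s)) n m by apply: ty_sum.
tr (Tadd (neg (F a)) (neg (sum_terms [seq F i | i <- s]))).
  by apply: eqv_add; auto; apply: eR; typ.
by apply: eS; apply: eqv_scaleDr.
Qed.

Lemma sum_rcons (F : nat -> term) s a : (forall x, x \in rcons s a -> typed (F x) n m) ->
  E n m (sum_terms (map F (rcons s a))) (Tadd (sum_terms (map F s)) (F a)).
Proof.
move=> HF; have HF' := HF; rewrite -cats1 in HF' *.
tr (Tadd (sum_terms (map F s)) (sum_terms (map F [:: a]))); first exact: sum_cat.
apply: eqv_add; first by apply: eR; apply: ty_sum => x Hx; apply: HF'; rewrite mem_cat Hx.
by apply: addr0; apply: HF'; rewrite mem_cat inE eqxx orbT.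
Qed.

Lemma sum_rev (F : nat -> term) s : (forall a, a \in s -> typed (F a) n m) ->
  E n m (sum_terms (map F (rev s))) (sum_terms (map F s)).
Proof.
elim: s => [|a s IH] HF /=; first by apply: eR; typ.
hyps.
have HS1 : typed (sum_terms (map F s)) n m by apply: ty_sum.
rewrite rev_cons; tr (Tadd (sum_terms (map F (rev s))) (F a)).
  by apply: sum_rcons => x; rewrite mem_rcons inE mem_rev => /orP [/eqP -> | ]; auto.
tr (Tadd (sum_terms (map F s)) (F a)); first by apply: eqv_add; auto; apply: eR.
exact: eqv_addC.
Qed.

End Sums.

Lemma sum_compl n m p (g : term) (F : nat -> term) s : typed g m p ->
  (forall a, a \in s -> typed (F a) n m) ->
  E n p (sum_terms (map (fun a => Tcomp g (F a)) s)) (Tcomp g (sum_terms (map F s))).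
Proof.
move=> Hg; elim: s => [|a s IH] HF /=; first by apply: eS; apply: (comp0r _ Hg).
hyps.
have HS1 : typed (sum_terms (map F s)) n m by apply: ty_sum.
tr (Tadd (Tcomp g (F a)) (Tcomp g (sum_terms [seq F i | i <- s]))).
  by apply: eqv_add; auto; apply: eR; typ.
by apply: eS; apply: (@eqv_compDr _ _ n m p); typ.
Qed.

Lemma sum_compr n m p (f : term) (F : nat -> term) s : typed f n m ->
  (forall a, a \in s -> typed (F a) m p) ->
  E n p (sum_terms (map (fun a => Tcomp (F a) f) s)) (Tcomp (sum_terms (map F s)) f).
Proof.
move=> Hf; elim: s => [|a s IH] HF /=; first by apply: eS; apply: (comp0l _ Hf).
hyps.
have HS1 : typed (sum_terms (map F s)) m p by apply: ty_sum.
tr (Tadd (Tcomp (F a) f) (Tcomp (sum_terms [seq F i | i <- s]) f)).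
  by apply: eqv_add; auto; apply: eR; typ.
by apply: eS; apply: (@eqv_compDl _ _ n m p); typ.
Qed.

Lemma sum_tensr a b (F : nat -> term) s : (forall i, i \in s -> typed (F i) a a) ->
  E (a + b) (a + b) (sum_terms (map (fun i => Ttens (F i) (Id b)) s)) (Ttens (sum_terms (map F s)) (Id b)).
Proof.
elim: s => [|i s IH] HF /=; first by apply: eS; apply: tens0l; typ.
hyps.
have HS1 : typed (sum_terms (map F s)) a a by apply: ty_sum.
tr (Tadd (Ttens (F i) (Id b)) (Ttens (sum_terms [seq F i | i <- s]) (Id b))).
  by apply: eqv_add; auto; apply: eR; typ.
by apply: eS; apply: eqv_tensDl; typ.
Qed.

Lemma sum_tensl a b (F : nat -> term) s : (forall i, i \in s -> typed (F i) b b) ->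
  E (a + b) (a + b) (sum_terms (map (fun i => Ttens (Id a) (F i)) s)) (Ttens (Id a) (sum_terms (map F s))).
Proof.
elim: s => [|i s IH] HF /=; first by apply: eS; apply: tens0r; typ.
hyps.
have HS1 : typed (sum_terms (map F s)) b b by apply: ty_sum.
tr (Tadd (Ttens (Id a) (F i)) (Ttens (Id a) (sum_terms [seq F i | i <- s]))).
  by apply: eqv_add; auto; apply: eR; typ.
by apply: eS; apply: eqv_tensDr; typ.
Qed.

Lemma ecast n m n' m' (f g : term) : E n m f g -> n = n' -> m = m' -> E n' m' f g.
Proof. by move=> H <- <-. Qed.

Lemma etens N M n1 m1 n2 m2 (f f' g g' : term) : E n1 m1 f f' -> E n2 m2 g g' ->
  N = (n1 + n2)%N -> M = (m1 + m2)%N -> E N M (Ttens f g) (Ttens f' g').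
Proof. by move=> H1 H2 -> ->; apply: eqv_tens. Qed.

Lemma etensA N M n1 m1 n2 m2 n3 m3 (f g h : term) :
  typed f n1 m1 -> typed g n2 m2 -> typed h n3 m3 ->
  N = (n1 + n2 + n3)%N -> M = (m1 + m2 + m3)%N ->
  E N M (Ttens (Ttens f g) h) (Ttens f (Ttens g h)).
Proof. by move=> ? ? ? -> ->; apply: eqv_tensA. Qed.

Lemma etid N a b : N = (a + b)%N -> E N N (Ttens (Id a) (Id b)) (Id N).
Proof. by move=> ->; apply: eqv_tens_id. Qed.

Lemma einter N M n1 m1 p1 n2 m2 p2 (f1 g1 f2 g2 : term) :
  typed f1 n1 m1 -> typed g1 m1 p1 -> typed f2 n2 m2 -> typed g2 m2 p2 ->
  N = (n1 + n2)%N -> M = (p1 + p2)%N ->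
  E N M (Tcomp (Ttens g1 g2) (Ttens f1 f2)) (Ttens (Tcomp g1 f1) (Tcomp g2 f2)).
Proof. by move=> ? ? ? ? -> ->; apply: (@eqv_interchange _ _ n1 m1 p1 n2 m2 p2). Qed.

Lemma ecomp n m p (g g' f f' : term) : E m p g g' -> E n m f f' -> E n p (Tcomp g f) (Tcomp g' f').
Proof. exact: eqv_comp. Qed.

Lemma idl n m (f : term) : typed f n m -> E n m (Tcomp (Id m) f) f.
Proof. exact: eqv_idl. Qed.
Lemma idr n m (f : term) : typed f n m -> E n m (Tcomp f (Id n)) f.
Proof. exact: eqv_idr. Qed.
Lemma cA n m p q (h g f : term) : typed h p q -> typed g m p -> typed f n m ->
  E n q (Tcomp h (Tcomp g f)) (Tcomp (Tcomp h g) f).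
Proof. exact: eqv_compA. Qed.

Lemma slide1 N M n1 m1 n2 m2 (f g : term) : typed f n1 m1 -> typed g n2 m2 ->
  N = (n1 + n2)%N -> M = (m1 + m2)%N ->
  E N M (Tcomp (Ttens f (Id m2)) (Ttens (Id n1) g)) (Ttens f g).
Proof.
move=> Hf Hg -> ->.
tr (Ttens (Tcomp f (Id n1)) (Tcomp (Id m2) g)); first by apply: einter; typ.
by apply: eqv_tens; [apply: idr | apply: idl].
Qed.

Lemma slide2 N M n1 m1 n2 m2 (f g : term) : typed f n1 m1 -> typed g n2 m2 ->
  N = (n1 + n2)%N -> M = (m1 + m2)%N ->
  E N M (Tcomp (Ttens (Id m1) g) (Ttens f (Id n2))) (Ttens f g).
Proof.
move=> Hf Hg -> ->.
tr (Ttens (Tcomp (Id m1) f) (Tcomp g (Id n2))); first by apply: einter; typ.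
by apply: eqv_tens; [apply: idl | apply: idr].
Qed.

Lemma ty_endpow n (f : term) r : typed f n n -> typed (endpow n f r) n n.
Proof. by move=> Hf; elim: r => [|r IH] /=; typ. Qed.

Lemma endpow_congr n (f g : term) r : E n n f g -> E n n (endpow n f r) (endpow n g r).
Proof.
move=> H; elim: r => [|r IH] /=; first by apply: eR; typ.
exact: (ecomp H IH).
Qed.

Lemma endpow_comm n (f : term) r : typed f n n ->
  E n n (Tcomp f (endpow n f r)) (Tcomp (endpow n f r) f).
Proof.
move=> Hf; elim: r => [|r IH] /=.
  by tr f; [apply: idr | apply: eS; apply: idl].
have Hp' := ty_endpow r Hf.
apply: eS; tr (Tcomp f (Tcomp (endpow n f r) f)); first by apply: eS; apply: cA; typ.
by apply: ecomp; [apply: eR | apply: eS; apply: IH].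
Qed.

Lemma endpow_tensr a b (f : term) r : typed f a a ->
  E (a + b) (a + b) (endpow (a + b) (Ttens f (Id b)) r) (Ttens (endpow a f r) (Id b)).
Proof.
move=> Hf; elim: r => [|r IH] /=; first by apply: eS; apply: eqv_tens_id.
have Hp := ty_endpow r Hf.
tr (Tcomp (Ttens f (Id b)) (Ttens (endpow a f r) (Id b))); first by apply: (ecomp _ IH); apply: eR; typ.
tr (Ttens (Tcomp f (endpow a f r)) (Tcomp (Id b) (Id b))); first by apply: einter; typ.
by apply: eqv_tens; [apply: eR; typ | apply: idl; typ].
Qed.

Lemma endpow_tensl a b (f : term) r : typed f b b ->
  E (a + b) (a + b) (endpow (a + b) (Ttens (Id a) f) r) (Ttens (Id a) (endpow b f r)).
Proof.
move=> Hf; elim: r => [|r IH] /=; first by apply: eS; apply: eqv_tens_id.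
have Hp := ty_endpow r Hf.
tr (Tcomp (Ttens (Id a) f) (Ttens (Id a) (endpow b f r))); first by apply: (ecomp _ IH); apply: eR; typ.
tr (Ttens (Tcomp (Id a) (Id a)) (Tcomp f (endpow b f r))); first by apply: einter; typ.
by apply: eqv_tens; [apply: idl; typ | apply: eR; typ].
Qed.

Lemma ty_xi n i : (i < n)%N -> typed (xi K n i) n n.
Proof. by move=> Hi; rewrite /xi; typ. Qed.

Lemma ty_power_sum r n : typed (power_sum K r n) n n.
Proof.
rewrite /power_sum; apply: ty_sum => i; rewrite mem_iota => /andP [_ Hi].
by apply: ty_endpow; apply: ty_xi.
Qed.


Lemma xi_split_l a b i : (i < a)%N ->
  E (a + b) (a + b) (xi K (a + b) i) (Ttens (xi K a i) (Id b)).
Proof.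
move=> Hi; rewrite /xi (_ : (a + b - i.+1 = a - i.+1 + b)%N); last by lia.
apply: eS.
tr (Ttens (Ttens (Id i) X) (Ttens (Id (a - i.+1)) (Id b))).
  by apply: etensA; (try typ); lia.
apply: etens; [apply: eR; typ | apply: etid; reflexivity | lia | lia].
Qed.

Lemma xi_split_r a b j : (j < b)%N ->
  E (a + b) (a + b) (xi K (a + b) (a + j)) (Ttens (Id a) (xi K b j)).
Proof.
move=> Hj; rewrite /xi (_ : (a + b - (a + j).+1 = b - j.+1)%N); last by lia.
tr (Ttens (Ttens (Ttens (Id a) (Id j)) X) (Id (b - j.+1))).
  apply: (@etens _ _ (a + j + 1) (a + j + 1) (b - j.+1) (b - j.+1)); [|apply: eR; typ| lia | lia].
  apply: (@etens _ _ (a + j) (a + j) 1 1); [apply: eS; apply: etid; reflexivity | apply: eR; typ | lia | lia].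
tr (Ttens (Ttens (Id a) (Ttens (Id j) X)) (Id (b - j.+1))).
  apply: (@etens _ _ (a + j + 1) (a + j + 1) (b - j.+1) (b - j.+1)); [|apply: eR; typ| lia | lia].
  by apply: etensA; (try typ); lia.
by apply: etensA; (try typ); lia.
Qed.

Lemma power_sum_tens r a b :
  E (a + b) (a + b) (power_sum K r (a + b))
    (Tadd (Ttens (power_sum K r a) (Id b)) (Ttens (Id a) (power_sum K r b))).
Proof.
rewrite /power_sum iotaD add0n.
tr (Tadd (sum_terms [seq endpow (a + b) (xi K (a + b) i) r | i <- iota 0 a])
         (sum_terms [seq endpow (a + b) (xi K (a + b) i) r | i <- iota a b])).
  apply: sum_cat => i; rewrite mem_cat !mem_iota => /orP [] /andP [_ Hi];
  by apply: ty_endpow; apply: ty_xi; lia.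
apply: eqv_add.
  tr (sum_terms [seq Ttens (endpow a (xi K a i) r) (Id b) | i <- iota 0 a]).
    apply: sum_congr => i; rewrite mem_iota => /andP [_ Hi].
    tr (endpow (a + b) (Ttens (xi K a i) (Id b)) r).
      by apply: endpow_congr; apply: xi_split_l.
    by apply: endpow_tensr; apply: ty_xi.
  apply: (@sum_tensr a b (fun i => endpow a (xi K a i) r)).
  by move=> i; rewrite mem_iota => /andP [_ Hi]; apply: ty_endpow; apply: ty_xi.
rewrite (_ : iota a b = map (addn a) (iota 0 b)); last by rewrite -iotaDl addn0.
rewrite -map_comp.
tr (sum_terms [seq Ttens (Id a) (endpow b (xi K b i) r) | i <- iota 0 b]).
  apply: sum_congr => i; rewrite mem_iota => /andP [_ Hi] /=.
  tr (endpow (a + b) (Ttens (Id a) (xi K b i)) r).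
    by apply: endpow_congr; apply: xi_split_r.
  by apply: endpow_tensl; apply: ty_xi.
apply: (@sum_tensl a b (fun i => endpow b (xi K b i) r)).
by move=> i; rewrite mem_iota => /andP [_ Hi]; apply: ty_endpow; apply: ty_xi.
Qed.


Section Central.
Variable r : nat.
Local Notation P k := (power_sum K r k).
Definition central (f : term) n m := E n m (Tcomp (P m) f) (Tcomp f (P n)).

Lemma tyP k : typed (P k) k k. Proof. exact: ty_power_sum. Qed.
Hint Resolve tyP : core.

Lemma central_id n : central (Id n) n n.
Proof. by rewrite /central; tr (P n); [apply: idr | apply: eS; apply: idl]. Qed.

Lemma central_zero n m : central Z n m.
Proof.
rewrite /central; tr (Tzero K); first exact: (comp0r _ (tyP m)).
by apply: eS; apply: (comp0l _ (tyP n)).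
Qed.

Lemma central_comp n m p (g f : term) : typed g m p -> typed f n m ->
  central g m p -> central f n m -> central (Tcomp g f) n p.
Proof.
rewrite /central => Hg Hf Cg Cf.
tr (Tcomp (Tcomp (P p) g) f); first by apply: cA; typ.
tr (Tcomp (Tcomp g (P m)) f); first by apply: ecomp Cg (eR Hf).
tr (Tcomp g (Tcomp (P m) f)); first by apply: eS; apply: cA; typ.
tr (Tcomp g (Tcomp f (P n))); first by apply: ecomp (eR Hg) Cf.
by apply: cA; typ.
Qed.

Lemma central_add n m (f g : term) : typed f n m -> typed g n m ->
  central f n m -> central g n m -> central (Tadd f g) n m.
Proof.
rewrite /central => Hf Hg Cf Cg.
tr (Tadd (Tcomp (P m) f) (Tcomp (P m) g)); first by apply: (@eqv_compDr _ _ n m m); typ.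
tr (Tadd (Tcomp f (P n)) (Tcomp g (P n))); first exact: eqv_add.
by apply: eS; apply: (@eqv_compDl _ _ n n m); typ.
Qed.

Lemma central_scale n m a (f : term) : typed f n m ->
  central f n m -> central (Tscale a f) n m.
Proof.
rewrite /central => Hf Cf.
tr (Tscale a (Tcomp (P m) f)); first by apply: (@eqv_compZr _ _ n m m); typ.
tr (Tscale a (Tcomp f (P n))); first exact: eqv_scale.
by apply: eS; apply: (@eqv_compZl _ _ n n m); typ.
Qed.

Lemma central_tens n1 m1 n2 m2 (f g : term) : typed f n1 m1 -> typed g n2 m2 ->
  central f n1 m1 -> central g n2 m2 -> central (Ttens f g) (n1 + n2) (m1 + m2).
Proof.
rewrite /central => Hf Hg Cf Cg.
have Hf' : typed (Tcomp f (P n1)) n1 m1 by typ.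
have Hg' : typed (Tcomp g (P n2)) n2 m2 by typ.
tr (Tadd (Ttens (Tcomp f (P n1)) g) (Ttens f (Tcomp g (P n2)))).
  tr (Tcomp (Tadd (Ttens (P m1) (Id m2)) (Ttens (Id m1) (P m2))) (Ttens f g)).
    by apply: ecomp; [apply: power_sum_tens | apply: eR; typ].
  tr (Tadd (Tcomp (Ttens (P m1) (Id m2)) (Ttens f g)) (Tcomp (Ttens (Id m1) (P m2)) (Ttens f g))).
    by apply: (@eqv_compDl _ _ (n1 + n2) (m1 + m2) (m1 + m2)); typ.
  apply: eqv_add.
    tr (Ttens (Tcomp (P m1) f) (Tcomp (Id m2) g)); first by apply: einter; typ.
    by apply: eqv_tens => //; apply: idl.
  tr (Ttens (Tcomp (Id m1) f) (Tcomp (P m2) g)); first by apply: einter; typ.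
  by apply: eqv_tens => //; apply: idl.
apply: eS.
tr (Tcomp (Ttens f g) (Tadd (Ttens (P n1) (Id n2)) (Ttens (Id n1) (P n2)))).
  by apply: ecomp; [apply: eR; typ | apply: power_sum_tens].
tr (Tadd (Tcomp (Ttens f g) (Ttens (P n1) (Id n2))) (Tcomp (Ttens f g) (Ttens (Id n1) (P n2)))).
  by apply: (@eqv_compDr _ _ (n1 + n2) (n1 + n2) (m1 + m2)); typ.
apply: eqv_add.
  tr (Ttens (Tcomp f (P n1)) (Tcomp g (Id n2))); first by apply: einter; typ.
  by apply: eqv_tens; [apply: eR | apply: idr].
tr (Ttens (Tcomp f (Id n1)) (Tcomp g (P n2))); first by apply: einter; typ.
by apply: eqv_tens; [apply: idr | apply: eR].
Qed.

End Central.


Lemma tcl N M k n m p (a b : term) : typed a m p -> typed b n m ->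
  N = (k + n)%N -> M = (k + p)%N ->
  E N M (Ttens (Id k) (Tcomp a b)) (Tcomp (Ttens (Id k) a) (Ttens (Id k) b)).
Proof.
move=> Ha Hb -> ->; apply: eS.
tr (Ttens (Tcomp (Id k) (Id k)) (Tcomp a b)); first by apply: einter; typ.
by apply: eqv_tens; [apply: idl; typ | apply: eR; typ].
Qed.

Lemma tcr N M k n m p (a b : term) : typed a m p -> typed b n m ->
  N = (n + k)%N -> M = (p + k)%N ->
  E N M (Ttens (Tcomp a b) (Id k)) (Tcomp (Ttens a (Id k)) (Ttens b (Id k))).
Proof.
move=> Ha Hb -> ->; apply: eS.
tr (Ttens (Tcomp a b) (Tcomp (Id k) (Id k))); first by apply: einter; typ.
by apply: eqv_tens; [apply: eR; typ | apply: idl; typ].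
Qed.

Lemma tens1l' N M (f : term) : typed f N M -> E N M (Ttens (Id 0) f) f.
Proof. exact: eqv_tens1l. Qed.
Lemma tens1r' N M (f : term) : typed f N M -> E N M (Ttens f (Id 0)) f.
Proof. exact: eqv_tens1r. Qed.

Local Notation X1 := (Ttens X I).
Local Notation X2 := (Ttens I X).

Lemma zig1 : E 1 1 (Tcomp (Ttens cap I) (Ttens I cup)) I.
Proof. exact: nb_zigzag1. Qed.
Lemma zig2 : E 1 1 (Tcomp (Ttens I cap) (Ttens cup I)) I.
Proof. exact: nb_zigzag2. Qed.

Lemma hX2 : E 1 1 (Tcomp (Ttens cap I) (Ttens I (Tcomp X2 cup))) X.
Proof.
tr (Tcomp (Ttens cap I) (Tcomp (Ttens I X2) (Ttens I cup))).
  by apply: ecomp; [apply: eR; typ | apply: tcl; (try typ); arith].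
tr (Tcomp (Tcomp (Ttens cap I) (Ttens I X2)) (Ttens I cup)); first by apply: cA; typ.
tr (Tcomp (Tcomp X (Ttens cap I)) (Ttens I cup)).
  apply: ecomp; last by apply: eR; typ.
  tr (Tcomp (Ttens cap I) (Ttens (Id 2) X)).
    apply: ecomp; first by apply: eR; typ.
    tr (Ttens (Ttens I I) X); first by apply: eS; apply: etensA; (try typ); arith.
    by apply: etens; [apply: etid | apply: eR; typ | arith | arith].
  tr (Ttens cap X); first by apply: slide1; (try typ); arith.
  tr (Tcomp (Ttens (Id 0) X) (Ttens cap I)); first by apply: eS; apply: slide2; (try typ); arith.
  by apply: ecomp; [apply: tens1l'; typ | apply: eR; typ].
tr (Tcomp X (Tcomp (Ttens cap I) (Ttens I cup))); first by apply: eS; apply: cA; typ.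
tr (Tcomp X I); first by apply: ecomp; [apply: eR; typ | apply: zig1].
by apply: idr; typ.
Qed.


Lemma hX1 : E 1 1 (Tcomp (Ttens cap I) (Ttens I (Tcomp X1 cup))) (neg X).
Proof.
tr (Tcomp (Ttens cap I) (Tcomp (Ttens I X1) (Ttens I cup))).
  by apply: ecomp; [apply: eR; typ | apply: tcl; (try typ); arith].
tr (Tcomp (Tcomp (Ttens cap I) (Ttens I X1)) (Ttens I cup)); first by apply: cA; typ.
tr (Tcomp (neg (Tcomp (Ttens cap I) (Ttens X1 I))) (Ttens I cup)).
  apply: ecomp; last by apply: eR; typ.
  tr (Tcomp (Ttens cap I) (Ttens X2 I)).
    apply: ecomp; first by apply: eR; typ.
    by apply: eS; apply: etensA; (try typ); arith.
  tr (Ttens (Tcomp cap X2) (Tcomp I I)); first by apply: einter; (try typ); arith.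
  tr (Ttens (neg (Tcomp cap X1)) I).
    by apply: etens; [apply: nb_capdot | apply: idl; typ | arith | arith].
  tr (neg (Ttens (Tcomp cap X1) I)); first by apply: etensZl; (try typ); arith.
  apply: eqv_scale.
  by apply: tcr; (try typ); arith.
tr (neg (Tcomp (Tcomp (Ttens cap I) (Ttens X1 I)) (Ttens I cup))); first by apply: eqv_compZl; typ.
apply: eqv_scale.
tr (Tcomp (Ttens cap I) (Tcomp (Ttens X1 I) (Ttens I cup))); first by apply: eS; apply: cA; typ.
tr (Tcomp (Ttens cap I) (Tcomp (Ttens I cup) X)).
  apply: ecomp; first by apply: eR; typ.
  tr (Tcomp (Ttens X (Id 2)) (Ttens I cup)).
    apply: ecomp; last by apply: eR; typ.
    tr (Ttens X (Ttens I I)); first by apply: etensA; (try typ); arith.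
    by apply: etens; [apply: eR; typ | apply: etid | arith | arith].
  tr (Ttens X cup); first by apply: slide1; (try typ); arith.
  tr (Tcomp (Ttens I cup) (Ttens X (Id 0))); first by apply: eS; apply: slide2; (try typ); arith.
  by apply: ecomp; [apply: eR; typ | apply: tens1r'; typ].
tr (Tcomp (Tcomp (Ttens cap I) (Ttens I cup)) X); first by apply: cA; typ.
tr (Tcomp I X); first by apply: ecomp; [apply: zig1 | apply: eR; typ].
by apply: idl; typ.
Qed.

Lemma Zbend : E 2 2 (Tcomp (Ttens I (Ttens cap I)) (Ttens cup (Id 2))) (Id 2).
Proof.
tr (Tcomp (Ttens (Ttens I cap) I) (Ttens (Ttens cup I) I)).
  apply: ecomp.
    by apply: eS; apply: etensA; (try typ); arith.
  tr (Ttens cup (Ttens I I)).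
    by apply: etens; [apply: eR; typ | apply: eS; apply: etid | arith | arith].
  by apply: eS; apply: etensA; (try typ); arith.
tr (Ttens (Tcomp (Ttens I cap) (Ttens cup I)) (Tcomp I I)); first by apply: einter; (try typ); arith.
tr (Ttens I I); first by apply: etens; [apply: zig2 | apply: idl; typ | arith | arith].
by apply: etid.
Qed.

Lemma unbend n (g : term) : typed g n 2 ->
  E n 2 g (Tcomp (Ttens I (Tcomp (Ttens cap I) (Ttens I g))) (Ttens cup (Id n))).
Proof.
move=> Hg; apply: eS.
tr (Tcomp (Tcomp (Ttens I (Ttens cap I)) (Ttens I (Ttens I g))) (Ttens cup (Id n))).
  by apply: ecomp; [apply: tcl; (try typ); arith | apply: eR; typ].
tr (Tcomp (Ttens I (Ttens cap I)) (Tcomp (Ttens I (Ttens I g)) (Ttens cup (Id n)))).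
  by apply: eS; apply: cA; typ.
tr (Tcomp (Ttens I (Ttens cap I)) (Tcomp (Ttens cup (Id 2)) g)).
  apply: ecomp; first by apply: eR; typ.
  tr (Tcomp (Ttens (Ttens I I) g) (Ttens cup (Id n))).
    apply: ecomp; last by apply: eR; typ.
    by apply: eS; apply: etensA; (try typ); arith.
  tr (Ttens (Tcomp (Ttens I I) cup) (Tcomp g (Id n))); first by apply: einter; (try typ); arith.
  tr (Ttens cup g).
    apply: (@etens _ _ 0 2 n 2); [|apply: idr; typ | arith | arith].
    tr (Tcomp (Id 2) cup); last by apply: idl; typ.
    by apply: ecomp; [apply: etid | apply: eR; typ].
  tr (Tcomp (Ttens cup (Id 2)) (Ttens (Id 0) g)); first by apply: eS; apply: slide1; (try typ); arith.
  by apply: ecomp; [apply: eR; typ | apply: tens1l'; typ].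
tr (Tcomp (Tcomp (Ttens I (Ttens cap I)) (Ttens cup (Id 2))) g); first by apply: cA; typ.
tr (Tcomp (Id 2) g); first by apply: ecomp; [apply: Zbend | apply: eR; typ].
by apply: idl.
Qed.

Lemma cupdot : E 0 2 (Tcomp X1 cup) (neg (Tcomp X2 cup)).
Proof.
tr (Tcomp (Ttens I (Tcomp (Ttens cap I) (Ttens I (Tcomp X1 cup)))) (Ttens cup (Id 0))).
  by apply: unbend; typ.
tr (Tcomp (Ttens I (neg X)) (Ttens cup (Id 0))).
  by apply: ecomp; [apply: etens; [apply: eR; typ | apply: hX1 | arith | arith] | apply: eR; typ].
tr (Tcomp (neg (Ttens I X)) (Ttens cup (Id 0))).
  by apply: ecomp; [apply: etensZr; (try typ); arith | apply: eR; typ].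
tr (neg (Tcomp (Ttens I X) (Ttens cup (Id 0)))); first by apply: eqv_compZl; typ.
apply: eqv_scale.
tr (Tcomp (Ttens I (Tcomp (Ttens cap I) (Ttens I (Tcomp X2 cup)))) (Ttens cup (Id 0))).
  by apply: ecomp; [apply: etens; [apply: eR; typ | apply: eS; apply: hX2 | arith | arith] | apply: eR; typ].
by apply: eS; apply: unbend; typ.
Qed.


Local Notation kk g := (Tcomp (Ttens I cap) (Ttens g I)).
Local Notation hh g := (Tcomp (Ttens cap I) (Ttens I g)).
Local Notation UU w := (Tcomp (Ttens I w) (Ttens cup (Id 2))).

Lemma capslide : E 3 1 (kk tau) (hh tau).
Proof. exact: nb_capslide. Qed.

Lemma K1 : E 3 1 (kk (Tcomp X1 tau)) (hh (Tcomp X2 tau)).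
Proof.
tr (Tcomp (Ttens I cap) (Tcomp (Ttens X1 I) (Ttens tau I))).
  by apply: ecomp; [apply: eR; typ | apply: tcr; (try typ); arith].
tr (Tcomp (Tcomp (Ttens I cap) (Ttens X1 I)) (Ttens tau I)); first by apply: cA; typ.
tr (Tcomp (Tcomp X (Ttens I cap)) (Ttens tau I)).
  apply: ecomp; last by apply: eR; typ.
  tr (Tcomp (Ttens I cap) (Ttens X (Id 2))).
    apply: ecomp; first by apply: eR; typ.
    tr (Ttens X (Ttens I I)); first by apply: etensA; (try typ); arith.
    by apply: etens; [apply: eR; typ | apply: etid | arith | arith].
  tr (Ttens X cap); first by apply: slide2; (try typ); arith.
  tr (Tcomp (Ttens X (Id 0)) (Ttens I cap)); first by apply: eS; apply: slide1; (try typ); arith.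
  by apply: ecomp; [apply: tens1r'; typ | apply: eR; typ].
tr (Tcomp X (kk tau)); first by apply: eS; apply: cA; typ.
tr (Tcomp X (hh tau)); first by apply: ecomp; [apply: eR; typ | apply: capslide].
tr (Tcomp (Tcomp X (Ttens cap I)) (Ttens I tau)); first by apply: cA; typ.
tr (Tcomp (Tcomp (Ttens cap I) (Ttens I X2)) (Ttens I tau)).
  apply: ecomp; last by apply: eR; typ.
  tr (Tcomp (Ttens (Id 0) X) (Ttens cap I)).
    by apply: ecomp; [apply: eS; apply: tens1l'; typ | apply: eR; typ].
  tr (Ttens cap X); first by apply: slide2; (try typ); arith.
  tr (Tcomp (Ttens cap I) (Ttens (Id 2) X)); first by apply: eS; apply: slide1; (try typ); arith.
  apply: ecomp; first by apply: eR; typ.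
  tr (Ttens (Ttens I I) X); first by apply: etens; [apply: eS; apply: etid | apply: eR; typ | arith | arith].
  by apply: etensA; (try typ); arith.
tr (Tcomp (Ttens cap I) (Tcomp (Ttens I X2) (Ttens I tau))); first by apply: eS; apply: cA; typ.
apply: ecomp; first by apply: eR; typ.
by apply: eS; apply: tcl; (try typ); arith.
Qed.

Lemma K2 : E 3 1 (kk (Tcomp tau X2)) (hh (Tcomp tau X1)).
Proof.
tr (Tcomp (Ttens I cap) (Tcomp (Ttens tau I) (Ttens X2 I))).
  by apply: ecomp; [apply: eR; typ | apply: tcr; (try typ); arith].
tr (Tcomp (kk tau) (Ttens X2 I)); first by apply: cA; typ.
tr (Tcomp (hh tau) (Ttens X2 I)); first by apply: ecomp; [apply: capslide | apply: eR; typ].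
tr (Tcomp (Ttens cap I) (Tcomp (Ttens I tau) (Ttens X2 I))); first by apply: eS; apply: cA; typ.
apply: ecomp; first by apply: eR; typ.
tr (Tcomp (Ttens I tau) (Ttens I X1)).
  apply: ecomp; first by apply: eR; typ.
  by apply: etensA; (try typ); arith.
by apply: eS; apply: tcl; (try typ); arith.
Qed.

Lemma K3 : E 3 1 (kk (Ttens I I)) (Ttens I cap).
Proof.
tr (Tcomp (Ttens I cap) (Id 3)); last by apply: idr; typ.
apply: ecomp; first by apply: eR; typ.
tr (Ttens (Id 2) I); first by apply: etens; [apply: etid | apply: eR; typ | arith | arith].
by apply: etid.
Qed.

Lemma K4 : E 3 1 (kk (Tcomp cup cap)) (Ttens cap I).
Proof.
tr (Tcomp (Ttens I cap) (Tcomp (Ttens cup I) (Ttens cap I))).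
  by apply: ecomp; [apply: eR; typ | apply: tcr; (try typ); arith].
tr (Tcomp (Tcomp (Ttens I cap) (Ttens cup I)) (Ttens cap I)); first by apply: cA; typ.
tr (Tcomp I (Ttens cap I)); first by apply: ecomp; [apply: zig2 | apply: eR; typ].
by apply: idl; typ.
Qed.

Lemma klin (a b : term) : typed a 2 2 -> typed b 2 2 ->
  E 3 1 (kk (Tadd a (neg b))) (Tadd (kk a) (neg (kk b))).
Proof.
move=> Ha Hb.
tr (Tcomp (Ttens I cap) (Tadd (Ttens a I) (neg (Ttens b I)))).
  apply: ecomp; first by apply: eR; typ.
  tr (Tadd (Ttens a I) (Ttens (neg b) I)); first by apply: etensDl; (try typ); arith.
  by apply: eqv_add; [apply: eR; typ | apply: etensZl; (try typ); arith].
tr (Tadd (kk a) (Tcomp (Ttens I cap) (neg (Ttens b I)))); first by apply: (@eqv_compDr _ _ 3 3 1); typ.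
by apply: eqv_add; [apply: eR; typ | apply: (@eqv_compZr _ _ 3 3 1); typ].
Qed.

Lemma Ulin (a b : term) : typed a 3 1 -> typed b 3 1 ->
  E 2 2 (UU (Tadd a (neg b))) (Tadd (UU a) (neg (UU b))).
Proof.
move=> Ha Hb.
tr (Tcomp (Tadd (Ttens I a) (neg (Ttens I b))) (Ttens cup (Id 2))).
  apply: ecomp; last by apply: eR; typ.
  tr (Tadd (Ttens I a) (Ttens I (neg b))); first by apply: etensDr; (try typ); arith.
  by apply: eqv_add; [apply: eR; typ | apply: etensZr; (try typ); arith].
tr (Tadd (UU a) (Tcomp (neg (Ttens I b)) (Ttens cup (Id 2)))); first by apply: (@eqv_compDl _ _ 2 4 2); typ.
by apply: eqv_add; [apply: eR; typ | apply: (@eqv_compZl _ _ 2 4 2); typ].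
Qed.

Lemma UIcap : E 2 2 (UU (Ttens I cap)) (Tcomp cup cap).
Proof.
tr (Tcomp (Ttens (Ttens I I) cap) (Ttens cup (Id 2))).
  by apply: ecomp; [apply: eS; apply: etensA; (try typ); arith | apply: eR; typ].
tr (Ttens (Tcomp (Ttens I I) cup) (Tcomp cap (Id 2))); first by apply: einter; (try typ); arith.
tr (Ttens cup cap).
  apply: (@etens _ _ 0 2 2 0); [|apply: idr; typ | arith | arith].
  tr (Tcomp (Id 2) cup); last by apply: idl; typ.
  by apply: ecomp; [apply: etid | apply: eR; typ].
tr (Tcomp (Ttens cup (Id 0)) (Ttens (Id 0) cap)); first by apply: eS; apply: slide1; (try typ); arith.
by apply: ecomp; [apply: tens1r'; typ | apply: tens1l'; typ].
Qed.

Lemma D2 : E 2 2 (Tadd (Tcomp X2 tau) (neg (Tcomp tau X1))) (Tadd (Tcomp cup cap) (neg (Ttens I I))).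
Proof.
tr (Tadd (UU (hh (Tcomp X2 tau))) (neg (UU (hh (Tcomp tau X1))))).
  by apply: eqv_add; [apply: unbend; typ | apply: eqv_scale; apply: unbend; typ].
tr (UU (Tadd (hh (Tcomp X2 tau)) (neg (hh (Tcomp tau X1))))); first by apply: eS; apply: Ulin; typ.
tr (UU (Tadd (Ttens I cap) (neg (Ttens cap I)))).
  apply: ecomp; last by apply: eR; typ.
  apply: etens; [apply: eR; typ | | arith | arith].
  tr (Tadd (kk (Tcomp X1 tau)) (neg (kk (Tcomp tau X2)))).
    by apply: eqv_add; [apply: eS; apply: K1 | apply: eqv_scale; apply: eS; apply: K2].
  tr (kk (Tadd (Tcomp X1 tau) (neg (Tcomp tau X2)))); first by apply: eS; apply: klin; typ.
  tr (kk (Tadd (Ttens I I) (neg (Tcomp cup cap)))).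
    by apply: ecomp; [apply: eR; typ | apply: etens; [apply: nb_dot | apply: eR; typ | arith | arith]].
  tr (Tadd (kk (Ttens I I)) (neg (kk (Tcomp cup cap)))); first by apply: klin; typ.
  by apply: eqv_add; [apply: K3 | apply: eqv_scale; apply: K4].
tr (Tadd (UU (Ttens I cap)) (neg (UU (Ttens cap I)))); first by apply: Ulin; typ.
apply: eqv_add; first exact: UIcap.
apply: eqv_scale; tr (Id 2); first exact: Zbend.
by apply: eS; apply: etid.
Qed.


Local Notation XA a := (endpow 2 X1 a).
Local Notation XB a := (endpow 2 X2 a).
Local Notation xp a := (endpow 1 X a).

Lemma tyXA a : typed (XA a) 2 2. Proof. by apply: ty_endpow; typ. Qed.
Lemma tyXB a : typed (XB a) 2 2. Proof. by apply: ty_endpow; typ. Qed.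
Lemma tyxp a : typed (xp a) 1 1. Proof. by apply: ty_endpow; typ. Qed.
Hint Resolve tyXA tyXB tyxp : core.

Lemma XAt a : E 2 2 (XA a) (Ttens (xp a) I).
Proof. by apply: (@endpow_tensr 1 1); typ. Qed.
Lemma XBt a : E 2 2 (XB a) (Ttens I (xp a)).
Proof. by apply: (@endpow_tensl 1 1); typ. Qed.

Lemma XAB a b : E 2 2 (Tcomp (XA a) (XB b)) (Ttens (xp a) (xp b)).
Proof.
tr (Tcomp (Ttens (xp a) I) (Ttens I (xp b))); first by apply: ecomp; [apply: XAt | apply: XBt].
by apply: slide1; (try typ); arith.
Qed.

Lemma XBA a b : E 2 2 (Tcomp (XB b) (XA a)) (Ttens (xp a) (xp b)).
Proof.
tr (Tcomp (Ttens I (xp b)) (Ttens (xp a) I)); first by apply: ecomp; [apply: XBt | apply: XAt].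
by apply: slide2; (try typ); arith.
Qed.

Lemma commAB a b : E 2 2 (Tcomp (XA a) (XB b)) (Tcomp (XB b) (XA a)).
Proof. by tr (Ttens (xp a) (xp b)); [apply: XAB | apply: eS; apply: XBA]. Qed.

Lemma X1XA : E 2 2 X1 (XA 1).
Proof. by apply: eS; apply: idr; typ. Qed.
Lemma X2XB : E 2 2 X2 (XB 1).
Proof. by apply: eS; apply: idr; typ. Qed.

Lemma scale_comp n m p a b (g f : term) : typed g m p -> typed f n m ->
  E n p (Tcomp (Tscale a g) (Tscale b f)) (Tscale (a * b) (Tcomp g f)).
Proof.
move=> Hg Hf.
tr (Tscale a (Tcomp g (Tscale b f))); first by apply: (@eqv_compZl _ _ n m p); typ.
tr (Tscale a (Tscale b (Tcomp g f))); first by apply: eqv_scale; apply: (@eqv_compZr _ _ n m p); typ.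
by apply: eqv_scaleA; typ.
Qed.

Lemma capdot_pow b : E 2 0 (Tcomp cap (XB b)) (Tscale ((-1) ^+ b) (Tcomp cap (XA b))).
Proof.
elim: b => [|b IH].
  by rewrite expr0; apply: eS; apply: eqv_scale1; typ.
rewrite /=.
tr (Tcomp (Tcomp cap X2) (XB b)); first by apply: cA; typ.
tr (Tcomp (neg (Tcomp cap X1)) (XB b)); first by apply: ecomp; [apply: nb_capdot | apply: eR].
tr (neg (Tcomp (Tcomp cap X1) (XB b))); first by apply: (@eqv_compZl _ _ 2 2 0); typ.
tr (neg (Tcomp cap (Tcomp (XB b) X1))).
  apply: eqv_scale.
  tr (Tcomp cap (Tcomp X1 (XB b))); first by apply: eS; apply: cA; typ.
  apply: ecomp; first by apply: eR; typ.
  tr (Tcomp (XA 1) (XB b)); first by apply: ecomp; [apply: X1XA | apply: eR].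
  tr (Tcomp (XB b) (XA 1)); first exact: commAB.
  by apply: ecomp; [apply: eR | apply: eS; apply: X1XA].
tr (neg (Tcomp (Tcomp cap (XB b)) X1)); first by apply: eqv_scale; apply: cA; typ.
tr (neg (Tcomp (Tscale ((-1) ^+ b) (Tcomp cap (XA b))) X1)).
  by apply: eqv_scale; apply: ecomp; [apply: IH | apply: eR; typ].
tr (neg (Tscale ((-1) ^+ b) (Tcomp (Tcomp cap (XA b)) X1))).
  by apply: eqv_scale; apply: (@eqv_compZl _ _ 2 2 0); typ.
tr (Tscale (-1 * (-1) ^+ b) (Tcomp (Tcomp cap (XA b)) X1)); first by apply: eqv_scaleA; typ.
rewrite exprS; apply: eqv_scale.
tr (Tcomp cap (Tcomp (XA b) X1)); first by apply: eS; apply: cA; typ.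
apply: ecomp; first by apply: eR; typ.
by apply: eS; apply: endpow_comm; typ.
Qed.

Lemma cupdot_pow a : E 0 2 (Tcomp (XA a) cup) (Tscale ((-1) ^+ a) (Tcomp (XB a) cup)).
Proof.
elim: a => [|a IH].
  by rewrite expr0; apply: eS; apply: eqv_scale1; typ.
rewrite /=.
tr (Tcomp (Tcomp (XA a) X1) cup).
  by tr (Tcomp X1 (Tcomp (XA a) cup)); [apply: eS; apply: cA; typ | tr (Tcomp (Tcomp X1 (XA a)) cup); [apply: cA; typ | apply: ecomp; [apply: endpow_comm; typ | apply: eR; typ]]].
tr (Tcomp (XA a) (Tcomp X1 cup)); first by apply: eS; apply: cA; typ.
tr (Tcomp (XA a) (neg (Tcomp X2 cup))); first by apply: ecomp; [apply: eR | apply: cupdot].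
tr (neg (Tcomp (XA a) (Tcomp X2 cup))); first by apply: (@eqv_compZr _ _ 0 2 2); typ.
tr (neg (Tcomp X2 (Tcomp (XA a) cup))).
  apply: eqv_scale.
  tr (Tcomp (Tcomp (XA a) X2) cup); first by apply: cA; typ.
  tr (Tcomp (Tcomp X2 (XA a)) cup); last by apply: eS; apply: cA; typ.
  apply: ecomp; last by apply: eR; typ.
  tr (Tcomp (XA a) (XB 1)); first by apply: ecomp; [apply: eR | apply: X2XB].
  tr (Tcomp (XB 1) (XA a)); first exact: commAB.
  by apply: ecomp; [apply: eS; apply: X2XB | apply: eR].
tr (neg (Tcomp X2 (Tscale ((-1) ^+ a) (Tcomp (XB a) cup)))).
  by apply: eqv_scale; apply: ecomp; [apply: eR; typ | apply: IH].
tr (neg (Tscale ((-1) ^+ a) (Tcomp X2 (Tcomp (XB a) cup)))).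
  by apply: eqv_scale; apply: (@eqv_compZr _ _ 0 2 2); typ.
tr (Tscale (-1 * (-1) ^+ a) (Tcomp X2 (Tcomp (XB a) cup))); first by apply: eqv_scaleA; typ.
rewrite exprS; apply: eqv_scale.
by apply: cA; typ.
Qed.


Definition SS (Y M W : term) k :=
  sum_terms [seq Tcomp (endpow 2 Y a) (Tcomp M (endpow 2 W (k - a.+1))) | a <- iota 0 k].

Lemma tySS (Y M W : term) k : typed Y 2 2 -> typed M 2 2 -> typed W 2 2 -> typed (SS Y M W k) 2 2.
Proof.
move=> HY HM HW; rewrite /SS; apply: ty_sum => a _.
have := ty_endpow a HY; have := ty_endpow (k - a.+1) HW; move=> *; typ.
Qed.

Lemma claim (Y M W : term) k : typed Y 2 2 -> typed M 2 2 -> typed W 2 2 ->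
  E 2 2 (Tcomp Y tau) (Tadd (Tcomp tau W) M) ->
  E 2 2 (Tcomp (endpow 2 Y k) tau) (Tadd (Tcomp tau (endpow 2 W k)) (SS Y M W k)).
Proof.
move=> HY HM HW H.
have HYk : forall a, typed (endpow 2 Y a) 2 2 by move=> a; apply: ty_endpow.
have HWk : forall a, typed (endpow 2 W a) 2 2 by move=> a; apply: ty_endpow.
have HS : forall k, typed (SS Y M W k) 2 2 by move=> k'; apply: tySS.
elim: k => [|k IH].
  rewrite /SS /=.
  tr (Ttau K); first by apply: idl; typ.
  tr (Tcomp tau (Id 2)); first by apply: eS; apply: idr; typ.
  by apply: eS; apply: addr0; typ.
rewrite /=.
tr (Tcomp Y (Tcomp (endpow 2 Y k) tau)); first by apply: eS; apply: cA; typ.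
tr (Tcomp Y (Tadd (Tcomp tau (endpow 2 W k)) (SS Y M W k))); first by apply: (ecomp (eR HY) IH).
tr (Tadd (Tcomp Y (Tcomp tau (endpow 2 W k))) (Tcomp Y (SS Y M W k))).
  by apply: (@eqv_compDr _ _ 2 2 2); typ.
tr (Tadd (Tadd (Tcomp tau (Tcomp W (endpow 2 W k))) (Tcomp M (endpow 2 W k))) (Tcomp Y (SS Y M W k))).
  apply: eqv_add; last by apply: eR; typ.
  tr (Tcomp (Tcomp Y tau) (endpow 2 W k)); first by apply: cA; typ.
  tr (Tcomp (Tadd (Tcomp tau W) M) (endpow 2 W k)); first by apply: (ecomp H (eR (HWk k))).
  tr (Tadd (Tcomp (Tcomp tau W) (endpow 2 W k)) (Tcomp M (endpow 2 W k))).
    by apply: (@eqv_compDl _ _ 2 2 2); typ.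
  by apply: eqv_add; [apply: eS; apply: cA; typ | apply: eR; typ].
tr (Tadd (Tcomp tau (Tcomp W (endpow 2 W k))) (Tadd (Tcomp M (endpow 2 W k)) (Tcomp Y (SS Y M W k)))).
  by apply: eS; apply: eqv_addA; typ.
apply: eqv_add; first by apply: eR; typ.
rewrite /SS /= subSS subn0.
apply: eqv_add; first by apply: eS; apply: idl; typ.
rewrite (_ : iota 1 k = map S (iota 0 k)); last by rewrite (iotaDl 1 0 k); apply: eq_map => i; rewrite add1n.
rewrite -map_comp.
tr (sum_terms [seq Tcomp Y (Tcomp (endpow 2 Y a) (Tcomp M (endpow 2 W (k - a.+1)))) | a <- iota 0 k]).
  by apply: eS; apply: (@sum_compl 2 2 2 Y (fun a => Tcomp (endpow 2 Y a) (Tcomp M (endpow 2 W (k - a.+1)))) (iota 0 k) HY) => a _; typ.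
apply: sum_congr => a _ /=.
rewrite subSS; apply: cA; typ.
Qed.


Lemma rev_iota0 r : [seq (r - a.+1)%N | a <- iota 0 r] = rev (iota 0 r).
Proof.
apply: (@eq_from_nth _ 0%N); first by rewrite size_map size_rev.
move=> i; rewrite size_map size_iota => Hi.
rewrite (nth_map 0%N) ?size_iota // nth_rev ?size_iota // !nth_iota //; lia.
Qed.

Lemma dist (A B P Q : term) : typed A 2 2 -> typed B 2 2 -> typed P 2 2 -> typed Q 2 2 ->
  E 2 2 (Tcomp A (Tcomp (Tadd P (neg Q)) B))
        (Tadd (Tcomp A (Tcomp P B)) (neg (Tcomp A (Tcomp Q B)))).
Proof.
move=> HA HB HP HQ.
tr (Tcomp A (Tadd (Tcomp P B) (neg (Tcomp Q B)))).
  apply: ecomp; first by apply: (eR HA).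
  tr (Tadd (Tcomp P B) (Tcomp (neg Q) B)); first by apply: (@eqv_compDl _ _ 2 2 2); typ.
  by apply: eqv_add; [apply: eR; typ | apply: (@eqv_compZl _ _ 2 2 2); typ].
tr (Tadd (Tcomp A (Tcomp P B)) (Tcomp A (neg (Tcomp Q B)))); first by apply: (@eqv_compDr _ _ 2 2 2); typ.
by apply: eqv_add; [apply: eR; typ | apply: (@eqv_compZr _ _ 2 2 2); typ].
Qed.

Local Notation cc := (Tcomp cup cap).
Local Notation I2 := (Ttens I I).

Lemma cc_swap r a : odd r -> (a < r)%N ->
  E 2 2 (Tcomp (XA a) (Tcomp cc (XB (r - a.+1)))) (Tcomp (XB a) (Tcomp cc (XA (r - a.+1)))).
Proof.
move=> Hr Ha; set b := (r - a.+1)%N.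
have re : forall C D : term, typed C 2 2 -> typed D 2 2 ->
    E 2 2 (Tcomp C (Tcomp cc D)) (Tcomp (Tcomp C cup) (Tcomp cap D)).
  move=> C D HC HD.
  tr (Tcomp C (Tcomp cup (Tcomp cap D))); first by apply: ecomp; [apply: (eR HC) | apply: eS; apply: cA; typ].
  by apply: cA; typ.
tr (Tcomp (Tcomp (XA a) cup) (Tcomp cap (XB b))); first exact: re.
tr (Tcomp (Tscale ((-1) ^+ a) (Tcomp (XB a) cup)) (Tscale ((-1) ^+ b) (Tcomp cap (XA b)))).
  by apply: ecomp; [apply: cupdot_pow | apply: capdot_pow].
tr (Tscale ((-1) ^+ a * (-1) ^+ b) (Tcomp (Tcomp (XB a) cup) (Tcomp cap (XA b)))).
  by apply: scale_comp; typ.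
rewrite -exprD -signr_odd (_ : odd (a + b) = false); last first.
  have e : r = (a + b).+1 by rewrite /b; lia.
  by move: Hr; rewrite {1}e /= => /negbTE.
rewrite expr0.
tr (Tcomp (Tcomp (XB a) cup) (Tcomp cap (XA b))); first by apply: eqv_scale1; typ.
by apply: eS; apply: re.
Qed.


Local Notation E1 := (Tadd I2 (neg cc)).
Local Notation E2 := (Tadd cc (neg I2)).

Lemma uT a b : E 2 2 (Tcomp (XA a) (Tcomp I2 (XB b))) (Ttens (xp a) (xp b)).
Proof.
tr (Tcomp (XA a) (XB b)); last exact: XAB.
apply: ecomp; first by apply: eR.
tr (Tcomp (Id 2) (XB b)); first by apply: ecomp; [apply: etid | apply: eR].
by apply: idl.
Qed.

Lemma vT a b : E 2 2 (Tcomp (XB a) (Tcomp I2 (XA b))) (Ttens (xp b) (xp a)).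
Proof.
tr (Tcomp (XB a) (XA b)); last exact: XBA.
apply: ecomp; first by apply: eR.
tr (Tcomp (Id 2) (XA b)); first by apply: ecomp; [apply: etid | apply: eR].
by apply: idl.
Qed.

Lemma S12 r : odd r -> E 2 2 (Tadd (SS X1 E1 X2 r) (SS X2 E2 X1 r)) Z.
Proof.
move=> Hr; rewrite /SS.
pose u a := Tcomp (XA a) (Tcomp I2 (XB (r - a.+1))).
pose c a := Tcomp (XA a) (Tcomp cc (XB (r - a.+1))).
pose c' a := Tcomp (XB a) (Tcomp cc (XA (r - a.+1))).
pose v a := Tcomp (XB a) (Tcomp I2 (XA (r - a.+1))).
have tyu : forall a, typed (u a) 2 2 by move=> a; rewrite /u; typ.
have tyc : forall a, typed (c a) 2 2 by move=> a; rewrite /c; typ.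
have tyc' : forall a, typed (c' a) 2 2 by move=> a; rewrite /c'; typ.
have tyv : forall a, typed (v a) 2 2 by move=> a; rewrite /v; typ.
tr (Tadd (sum_terms [seq Tadd (u a) (neg (c a)) | a <- iota 0 r])
         (sum_terms [seq Tadd (c' a) (neg (v a)) | a <- iota 0 r])).
  by apply: eqv_add; apply: sum_congr => a _; apply: dist; typ.
tr (sum_terms [seq Tadd (Tadd (u a) (neg (c a))) (Tadd (c' a) (neg (v a))) | a <- iota 0 r]).
  by apply: eS; apply: (@sum_add 2 2 (fun a => Tadd (u a) (neg (c a))) (fun a => Tadd (c' a) (neg (v a)))) => a _; typ.
tr (sum_terms [seq Tadd (u a) (neg (v a)) | a <- iota 0 r]).
  apply: sum_congr => a; rewrite mem_iota => /andP [_ Ha].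
  tr (Tadd (u a) (Tadd (neg (c a)) (Tadd (c' a) (neg (v a))))); first by apply: eS; apply: eqv_addA; typ.
  apply: eqv_add; first by apply: eR.
  tr (Tadd (Tadd (neg (c a)) (c' a)) (neg (v a))); first by apply: eqv_addA; typ.
  tr (Tadd Z (neg (v a))); last by apply: eqv_add0; typ.
  apply: eqv_add; last by apply: eR; typ.
  tr (Tadd (neg (c a)) (c a)).
    by apply: eqv_add; [apply: eR; typ | apply: eS; apply: cc_swap].
  tr (Tadd (c a) (neg (c a))); first by apply: eqv_addC; typ.
  exact: addNr.
tr (Tadd (sum_terms [seq u a | a <- iota 0 r]) (sum_terms [seq neg (v a) | a <- iota 0 r])).
  by apply: (@sum_add 2 2 u (fun a => neg (v a))) => a _; typ.
have Hsu : typed (sum_terms [seq u a | a <- iota 0 r]) 2 2 by apply: ty_sum.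
tr (Tadd (sum_terms [seq u a | a <- iota 0 r]) (neg (sum_terms [seq u a | a <- iota 0 r]))); last exact: addNr.
apply: eqv_add; first by apply: eR.
tr (neg (sum_terms [seq v a | a <- iota 0 r])); first by apply: sum_neg.
apply: eqv_scale.
pose G a := Ttens (xp a) (xp (r - a.+1)).
tr (sum_terms [seq G a | a <- iota 0 r]); last first.
  by apply: eS; apply: sum_congr => a _; apply: uT.
tr (sum_terms [seq G a | a <- rev (iota 0 r)]); last first.
  by apply: sum_rev => a _; rewrite /G; typ.
rewrite -rev_iota0 -map_comp.
apply: sum_congr => a; rewrite mem_iota => /andP [_ Ha] /=.
rewrite /G (_ : (r - (r - a.+1).+1 = a)%N); last by lia.
exact: vT.
Qed.


Lemma xi20 : E 2 2 (xi K 2 0) X1.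
Proof. by rewrite /xi; apply: etens; [apply: tens1l'; typ | apply: eR; typ | arith | arith]. Qed.
Lemma xi21 : E 2 2 (xi K 2 1) X2.
Proof. by rewrite /xi; apply: tens1r'; typ. Qed.
Lemma xi10 : E 1 1 (xi K 1 0) X.
Proof. by rewrite /xi; tr (Ttens (Id 0) X); [apply: tens1r'; typ | apply: tens1l'; typ]. Qed.

Lemma P2Q r : E 2 2 (power_sum K r 2) (Tadd (XA r) (XB r)).
Proof.
rewrite /power_sum /=.
tr (Tadd (endpow 2 (xi K 2 0) r) (endpow 2 (xi K 2 1) r)).
  by apply: eqv_add; [apply: eR | apply: addr0]; apply: ty_endpow; apply: ty_xi.
by apply: eqv_add; apply: endpow_congr; [apply: xi20 | apply: xi21].
Qed.

Lemma P1x r : E 1 1 (power_sum K r 1) (xp r).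
Proof.
rewrite /power_sum /=.
tr (endpow 1 (xi K 1 0) r); first by apply: addr0; apply: ty_endpow; apply: ty_xi.
by apply: endpow_congr; apply: xi10.
Qed.

Lemma central_x r : central r X 1 1.
Proof.
rewrite /central.
tr (Tcomp (xp r) X); first by apply: ecomp; [apply: P1x | apply: eR; typ].
tr (Tcomp X (xp r)); first by apply: eS; apply: endpow_comm; typ.
by apply: ecomp; [apply: eR; typ | apply: eS; apply: P1x].
Qed.

Lemma signr_oddT r : odd r -> (-1) ^+ r = -1 :> K.
Proof. by move=> Hr; rewrite -signr_odd Hr expr1. Qed.

Lemma central_cap r : odd r -> central r cap 2 0.
Proof.
move=> Hr; rewrite /central.
tr (Tzero K); first by apply: (@comp0l 2 0 0 cap (ty_cap K)).
apply: eS.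
tr (Tcomp cap (Tadd (XA r) (XB r))); first by apply: ecomp; [apply: eR; typ | apply: P2Q].
tr (Tadd (Tcomp cap (XA r)) (Tcomp cap (XB r))); first by apply: (@eqv_compDr _ _ 2 2 0); typ.
tr (Tadd (Tcomp cap (XA r)) (neg (Tcomp cap (XA r)))); last by apply: addNr; typ.
apply: eqv_add; first by apply: eR; typ.
by rewrite -(signr_oddT Hr); apply: capdot_pow.
Qed.

Lemma central_cup r : odd r -> central r cup 0 2.
Proof.
move=> Hr; rewrite /central.
apply: eS; tr (Tzero K); first by apply: (@comp0r 0 0 2 cup (ty_cup K)).
apply: eS.
tr (Tcomp (Tadd (XA r) (XB r)) cup); first by apply: ecomp; [apply: P2Q | apply: eR; typ].
tr (Tadd (Tcomp (XA r) cup) (Tcomp (XB r) cup)); first by apply: (@eqv_compDl _ _ 0 2 2); typ.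
tr (Tadd (neg (Tcomp (XB r) cup)) (Tcomp (XB r) cup)).
  apply: eqv_add; last by apply: eR; typ.
  by rewrite -(signr_oddT Hr); apply: cupdot_pow.
tr (Tadd (Tcomp (XB r) cup) (neg (Tcomp (XB r) cup))); first by apply: eqv_addC; typ.
by apply: addNr; typ.
Qed.

Lemma D1' : E 2 2 (Tcomp X1 tau) (Tadd (Tcomp tau X2) E1).
Proof. by apply: add_move; try typ; apply: nb_dot. Qed.
Lemma D2' : E 2 2 (Tcomp X2 tau) (Tadd (Tcomp tau X1) E2).
Proof. by apply: add_move; try typ; apply: D2. Qed.

Lemma central_tau r : odd r -> central r tau 2 2.
Proof.
move=> Hr; rewrite /central.
have HS1 : typed (SS X1 E1 X2 r) 2 2 by apply: tySS; typ.
have HS2 : typed (SS X2 E2 X1 r) 2 2 by apply: tySS; typ.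
tr (Tcomp (Tadd (XA r) (XB r)) tau); first by apply: ecomp; [apply: P2Q | apply: eR; typ].
tr (Tadd (Tcomp (XA r) tau) (Tcomp (XB r) tau)); first by apply: (@eqv_compDl _ _ 2 2 2); typ.
tr (Tadd (Tadd (Tcomp tau (XB r)) (SS X1 E1 X2 r)) (Tadd (Tcomp tau (XA r)) (SS X2 E2 X1 r))).
  by apply: eqv_add; apply: claim; try typ; [apply: D1' | apply: D2'].
tr (Tadd (Tadd (Tcomp tau (XB r)) (Tcomp tau (XA r))) (Tadd (SS X1 E1 X2 r) (SS X2 E2 X1 r))).
  by apply: add4; typ.
tr (Tadd (Tadd (Tcomp tau (XB r)) (Tcomp tau (XA r))) Z).
  by apply: eqv_add; [apply: eR; typ | apply: S12].
tr (Tadd (Tcomp tau (XB r)) (Tcomp tau (XA r))); first by apply: addr0; typ.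
tr (Tadd (Tcomp tau (XA r)) (Tcomp tau (XB r))); first by apply: eqv_addC; typ.
tr (Tcomp tau (Tadd (XA r) (XB r))); first by apply: eS; apply: (@eqv_compDr _ _ 2 2 2); typ.
by apply: ecomp; [apply: eR; typ | apply: eS; apply: P2Q].
Qed.

End P.

Theorem corollary3p9 (K : fieldType) (hK : (2%:R : K) != 0) (t : bool)
  (r : nat) (hr : odd r) :
  forall (n m : nat) (f : term K), typed f n m ->
    eqv t n m (Tcomp (power_sum K r m) f) (Tcomp f (power_sum K r n)).
Proof.
move=> n m f Hf.
change (central t r f n m).
elim: Hf => {n m f}.
- exact: central_id.
- exact: central_x.
- exact: central_tau.
- exact: central_cap.
- exact: central_cup.
- by move=> g f n m p Hg Cg Hf Cf; eapply central_comp; eassumption.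
- by move=> f g n1 m1 n2 m2 Hf Cf Hg Cg; eapply central_tens; eassumption.
- exact: central_zero.
- by move=> f g n m Hf Cf Hg Cg; eapply central_add; eassumption.
- by move=> a f n m Hf Cf; eapply central_scale; eassumption.
Qed.
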